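(* Let $T$ be a type distribution on $\mathcal{S}\subseteq\mathbb{N}$ with $q_k=\mathbb{P}(T=k)$, $C=(C^{\text{out}},C^{\text{in}})$ a colour distribution with $p_{ij}=\mathbb{P}(C^{\text{out}}=i,C^{\text{in}}=j)$, $I:\mathcal{S}\times\mathcal{C}^{\text{out}}\to\{0,1\}$, $J:\mathcal{S}\times\mathcal{C}^{\text{in}}\to\{0,1\}$, $\mu>0$, $\lambda_i=\sum_kq_kI(k,i)$, $\varrho_j=\sum_kq_kJ(k,j)$. Assume $\mathcal{S},\mathcal{C}^{\text{out}},\mathcal{C}^{\text{in}}\subseteq\mathbb{N}$, $\mathbb{E}[T^{1+\varepsilon}]<\infty$ for some $\varepsilon>0$, $\inf_i\{\lambda_i:\lambda_i>0\}>0$ and $\inf_j\{\varrho_j:\varrho_j>0\}>0$. Then the kernel $$\kappa(t,s)=\mu\sum_{i=1}^\infty\sum_{j=1}^\infty\frac{p_{ij}I(t,i)J(s,j)}{\lambda_i\varrho_j}$$ is bounded on $\mathcal{S}\times\mathcal{S}$. *)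

(* Defs.v *)
From HB Require Import structures.
From mathcomp Require Import all_boot all_order all_algebra.
From mathcomp Require Import all_classical all_reals all_analysis.
Set Implicit Arguments. Unset Strict Implicit. Unset Printing Implicit Defensive.
Import Order.TTheory GRing.Theory Num.Theory.
Local Open Scope ring_scope.
Local Open Scope ereal_scope.

Definition lam (R : realType) (q : nat -> R) (I : nat -> nat -> bool) (i : nat)
  : \bar R := \sum_(0 <= k <oo) (q k * (I k i)%:R)%:E.

Definition rho (R : realType) (q : nat -> R) (J : nat -> nat -> bool) (j : nat)
  : \bar R := \sum_(0 <= k <oo) (q k * (J k j)%:R)%:E.

(* kappa(t,s) = mu * sum_{i>=1} sum_{j>=1} p_ij I(t,i) J(s,j) / (lambda_i rho_j),
   a series of nonnegative terms, valued in the extended reals.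
   Convention: x / 0 = 0 (MathComp's division). *)
Definition kappa (R : realType) (mu : R) (q : nat -> R) (p : nat -> nat -> R)
  (I J : nat -> nat -> bool) (t s : nat) : \bar R :=
  mu%:E * \sum_(1 <= i <oo) \sum_(1 <= j <oo)
    ((p i j * (I t i)%:R * (J s j)%:R) / (fine (lam q I i) * fine (rho q J j)))%:E.

(* Main.v *)
Require Import Defs.
From HB Require Import structures.
From mathcomp Require Import all_boot all_order all_algebra.
From mathcomp Require Import all_classical all_reals all_analysis.
Import Order.TTheory GRing.Theory Num.Theory.
Local Open Scope ring_scope.

Lemma realbound (R : realType) (x P a b c d : R) : 0 <= x -> x <= P -> 0 < c -> 0 < d ->
  (a = 0 \/ c <= a) -> (b = 0 \/ d <= b) -> x / (a * b) <= P / (c * d).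
Proof.
move=> x0 xP c0 d0 ha hb.
have P0 : 0 <= P by exact: le_trans xP.
have cd0 : 0 < c * d by rewrite mulr_gt0.
have Pge0 : 0 <= P / (c * d) by rewrite divr_ge0 // ltW.
case: ha => [->|ca]; first by rewrite mul0r invr0 mulr0.
case: hb => [->|db]; first by rewrite mulr0 invr0 mulr0.
have a0 : 0 < a := lt_le_trans c0 ca.
have b0 : 0 < b := lt_le_trans d0 db.
have ab0 : 0 < a * b by rewrite mulr_gt0.
rewrite ler_pdivrMr // mulrAC ler_pdivlMr //.
have h : c * d <= a * b by rewrite ler_pM // ltW.
by apply: ler_pM => //; apply: ltW.
Qed.

Lemma fine_alt (R : realType) (x : \bar R) (c : R) : (0 <= x)%E ->
  (forall _ : (0 < x)%E, (c%:E <= x)%E) -> fine x = 0 \/ c <= fine x.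
Proof.
case: x => [r| |] //= x0 h; last by left.
rewrite lee_fin in x0.
have [->|rn0] := eqVneq r 0; first by left.
right; rewrite -lee_fin; apply: h; rewrite lte_fin lt_def rn0 //.
Qed.

Lemma shift_le (R : realType) (f : nat -> \bar R) : (forall k, 0 <= f k)%E ->
  (\sum_(1 <= k <oo) f k <= \sum_(0 <= k <oo) f k)%E.
Proof.
move=> f0; rewrite (@nneseries_split _ _ 0 1) // add0n.
by apply: leeDr; rewrite big_nat1.
Qed.

Theorem lemma6 (R : realType)
  (S Cout Cin : set nat)
  (q : nat -> R) (p : nat -> nat -> R)
  (I J : nat -> nat -> bool) (mu : R)
  (hq0 : forall k, 0 <= q k)
  (hqS : forall k, ~ S k -> q k = 0)
  (hq1 : (\sum_(0 <= k <oo) (q k)%:E)%E = 1%E)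
  (hp0 : forall i j, 0 <= p i j)
  (hpC : forall i j, ~ (Cout i /\ Cin j) -> p i j = 0)
  (hp1 : (\sum_(0 <= i <oo) \sum_(0 <= j <oo) (p i j)%:E)%E = 1%E)
  (hmu : 0 < mu)
  (hmom : exists2 eps : R, 0 < eps &
     (\sum_(0 <= k <oo) (q k * (k%:R `^ (1 + eps)))%:E < +oo)%E)
  (hlam : exists2 c : R, 0 < c &
     forall i, (0 < lam q I i)%E -> (c%:E <= lam q I i)%E)
  (hrho : exists2 c : R, 0 < c &
     forall j, (0 < rho q J j)%E -> (c%:E <= rho q J j)%E) :
  exists M : R, forall t s, S t -> S s -> (kappa mu q p I J t s <= M%:E)%E.
Proof.
case: hlam => c c0 hc; case: hrho => d d0 hd.
exists (mu * (c * d)^-1) => t s _ _.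
have lam0 i : (0 <= lam q I i)%E.
  by apply: nneseries_ge0 => k _ _; rewrite lee_fin mulr_ge0.
have rho0 j : (0 <= rho q J j)%E.
  by apply: nneseries_ge0 => k _ _; rewrite lee_fin mulr_ge0.
have tb i j : 0 <= p i j * (I t i)%:R * (J s j)%:R /
      (fine (lam q I i) * fine (rho q J j)) <= (c * d)^-1 * p i j.
  have x0 : 0 <= p i j * (I t i)%:R * (J s j)%:R by rewrite !mulr_ge0.
  apply/andP; split.
    have [la|la] := @fine_alt _ _ _ (lam0 i) (@hc i);
    have [ro|ro] := @fine_alt _ _ _ (rho0 j) (@hd j).
    - by rewrite la mul0r invr0 mulr0.
    - by rewrite la mul0r invr0 mulr0.
    - by rewrite ro mulr0 invr0 mulr0.
    - rewrite divr_ge0 // mulr_ge0 // ltW //.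
      exact: lt_le_trans c0 la. exact: lt_le_trans d0 ro.
  rewrite [X in _ <= X]mulrC; apply: realbound => //.
  - by case: (I t i); case: (J s j); rewrite /= ?mulr1 ?mulr0.
  - exact: @fine_alt _ _ _ (lam0 i) (@hc i).
  - exact: @fine_alt _ _ _ (rho0 j) (@hd j).
rewrite /kappa EFinM lee_pmul2l ?lte_fin //.
apply: (@le_trans _ _ (\sum_(1 <= i <oo) \sum_(1 <= j <oo) (((c * d)^-1)%:E * (p i j)%:E))%E).
  apply: lee_nneseries => [i _ _|i _].
    by apply: nneseries_ge0 => j _ _; rewrite lee_fin; case/andP: (tb i j).
  apply: lee_nneseries => [j _ _|j _].
    by rewrite lee_fin; case/andP: (tb i j).
  by rewrite -EFinM lee_fin; case/andP: (tb i j).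
have pge0 : forall i j, (0 <= (p i j)%:E)%E by move=> i j; rewrite lee_fin.
have -> : (\sum_(1 <= i <oo) \sum_(1 <= j <oo) (((c * d)^-1)%:E * (p i j)%:E) =
    ((c * d)^-1)%:E * \sum_(1 <= i <oo) \sum_(1 <= j <oo) (p i j)%:E)%E.
  rewrite -nneseriesZl; last first.
    by move=> i _; apply: nneseries_ge0 => j _ _.
  by apply: eq_eseriesr => i _; rewrite nneseriesZl.
rewrite -[X in (_ <= X)%E]mule1 lee_pmul2l ?lte_fin ?invr_gt0 ?mulr_gt0 //.
rewrite -hp1.
apply: le_trans; last first.
  by apply: shift_le => i; apply: nneseries_ge0 => j _ _.
apply: lee_nneseries => [i _ _|i _].
  by apply: nneseries_ge0 => j _ _.
exact: shift_le.
Qed.
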